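(* For every $r\in\mathbb N$ and every finite graph $G$, \[\mathrm{adm}_r(G)+1\le \mathrm{copw}_r(G)\le \mathrm{wcol}_{2r}(G)+1.\]
   Context: Graphs are finite, simple, undirected. For $r\in\mathbb N$ and $k\ge 1$, the Cops and Robber game of radius $r$ and width $k$ on $G$: let $S_0=\emptyset$ and let the robber choose $v_0\in V(G)$; in round $i\ge1$ the cops announce $S_i\subseteq V(G)$ with $|S_i|\le k$, and then the robber moves from $v_{i-1}$ to $v_i$ along a path of length at most $r$ (length $0$ allowed) containing no vertex of $S_{i-1}\cap S_i$. The cops win if $v_i\in S_i$ for some $i$. $\mathrm{copw}_r(G)$ is the least $k$ for which the cops have a winning strategy. The $r$-weak coloring number $\mathrm{wcol}_r(G)$ is the least $k$ such that there is a total order $<$ on $V(G)$ in which, for every vertex $v$, at most $k$ vertices $w<v$ are weakly $r$-reachable from $v$, i.e. there is a path of length at most $r$ from $v$ to $w$ on which $w$ is the $<$-smallest vertex. The $r$-admissibility $\mathrm{adm}_r(G)$ is the least $k$ such that there is a total order $<$ on $V(G)$ such that for every $v$ there are no more than $k$ paths of length at most $r$ starting at $v$, ending at some vertex $w<v$, and pairwise sharing only the vertex $v$. *)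

(* Defs.v *)
From mathcomp Require Import all_boot.
From Stdlib Require Import ClassicalEpsilon.

Set Implicit Arguments.
Unset Strict Implicit.
Unset Printing Implicit Defensive.

(* The least natural number satisfying P (chosen classically; it is the
   genuine minimum whenever some number satisfies P). *)
Definition least (P : nat -> Prop) : nat :=
  epsilon (inhabits 0) (fun n => P n /\ forall m, P m -> n <= m).

Section Graph.
Variables (T : finType) (e : rel T).

(* A (simple) path x :: s : consecutive vertices adjacent, no repetitions.
   Its length is size s, its vertex set is x :: s, its end is last x s. *)
Definition gpath (x : T) (s : seq T) : bool := path e x s && uniq (x :: s).

(* A total order on V(G) is encoded by an injective rank f : T -> nat,
   with w < v iff f w < f v. *)

Definition wreach (f : T -> nat) (r : nat) (v w : T) : Prop :=
  exists s : seq T, [/\ gpath v s, last v s = w, size s <= r &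
                        forall x, x \in v :: s -> f w <= f x].

Definition wcol_ok (r k : nat) : Prop :=
  exists f : T -> nat, injective f /\
    forall (v : T) (A : {set T}),
      (forall w, w \in A -> f w < f v /\ wreach f r v w) -> #|A| <= k.

Definition wcol (r : nat) : nat := least (wcol_ok r).

Definition adm_ok (r k : nat) : Prop :=
  exists f : T -> nat, injective f /\
    forall (v : T) (F : seq (seq T)),
      (forall s, s \in F -> [/\ gpath v s, size s <= r & f (last v s) < f v]) ->
      (forall i j, i < size F -> j < size F -> i != j ->
         forall x, x \in v :: nth [::] F i -> x \in v :: nth [::] F j -> x = v) ->
      size F <= k.

Definition adm (r : nat) : nat := least (adm_ok r).

Definition robber_move (r : nat) (X : {set T}) (a b : T) : Prop :=
  exists s : seq T, [/\ gpath a s, last a s = b, size s <= r &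
                        forall x, x \in a :: s -> x \notin X].

(* Cops' positions along a robber play v : nat -> T (v i = v_i), under the
   cop strategy sigma, which maps the history [v_0; ...; v_(i-1)] to S_i.
   S_0 is empty. *)
Definition cop_sets (sigma : seq T -> {set T}) (v : nat -> T) (i : nat) : {set T} :=
  if i is i'.+1 then sigma (mkseq v i) else set0.

Definition cops_win (r k : nat) : Prop :=
  exists sigma : seq T -> {set T},
    (forall h, #|sigma h| <= k) /\
    forall v : nat -> T,
      (forall i, robber_move r (cop_sets sigma v i :&: cop_sets sigma v i.+1)
                             (v i) (v i.+1)) ->
      exists i, 0 < i /\ v i \in cop_sets sigma v i.

Definition copw (r : nat) : nat := least (fun k => 1 <= k /\ cops_win r k).

End Graph.

(* Main.v *)
Require Import Defs.
From Stdlib Require Import ClassicalEpsilon Classical.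
From mathcomp Require Import all_boot.

Set Implicit Arguments.
Unset Strict Implicit.
Unset Printing Implicit Defensive.

Lemma least_spec (P : nat -> Prop) :
  (exists n, P n) -> P (least P) /\ forall m, P m -> least P <= m.
Proof.
move=> [n Pn].
rewrite /least; apply: (epsilon_spec (inhabits 0) (fun n => P n /\ forall m, P m -> n <= m)).
pose b := fun m => if excluded_middle_informative (P m) then true else false.
have bP m : reflect (P m) (b m).
  by rewrite /b; case: excluded_middle_informative => H; constructor.
have exb : exists m, b m by exists n; apply/bP.
case: (ex_minnP exb) => m /bP Pm Hmin.
by exists m; split=> // m' /bP; exact: Hmin.
Qed.

Section G.
Variables (T : finType) (e : rel T).

Lemma walk_wreach (f : T -> nat) R v s u :
  path e v s -> size s <= R -> u \in v :: s ->
  (forall x, x \in v :: s -> f u <= f x) -> wreach e f R v u.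
Proof.
move=> pth sz uin fmin.
have [s1 [p1 l1 sz1 sub1]] : exists s1, [/\ path e v s1, last v s1 = u,
    size s1 <= size s & {subset v :: s1 <= v :: s}].
  rewrite inE in uin; case/orP: uin => [/eqP ->|uin].
    by exists [::]; split => // x; rewrite !inE => /eqP ->; rewrite eqxx.
  move: pth; case/splitPr: uin => s1 s2 pth.
  exists (rcons s1 u); split.
  - move: pth; rewrite cat_path rcons_path /= => /andP[-> /andP[-> _]] //.
  - by rewrite last_rcons.
  - by rewrite size_rcons size_cat /= addnS ltnS leq_addr.
  - move=> x; rewrite inE mem_rcons !inE mem_cat !inE.
    by case/orP=> [->//|/orP[->|->]]; rewrite ?orbT.
subst u.
move: fmin {uin}; case: (shortenP p1) => s' p' u' sub' fmin.
exists s'; split.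
- by rewrite /gpath p' u'.
- done.
- apply: leq_trans (leq_trans _ sz1) sz.
  apply: uniq_leq_size; first by case/andP: u'.
  done.
- move=> x xin; apply: fmin; apply: sub1.
  move: xin; rewrite !inE => /orP[->//|/sub' ->]; by rewrite orbT.
Qed.

Definition WR (f : T -> nat) R v : {set T} :=
  [set w | if excluded_middle_informative (wreach e f R v w) then true else false].

Lemma inWR f R v w : (w \in WR f R v) <-> wreach e f R v w.
Proof.
by rewrite inE; case: excluded_middle_informative.
Qed.

Lemma last_mkseq (v : nat -> T) n x : last x (mkseq v n.+1) = v n.
Proof. by rewrite mkseqS last_rcons. Qed.

Lemma upper r k : wcol_ok e (2 * r) k -> cops_win e r k.+1.
Proof.
case=> f [finj Hf].
pose W v := WR f (2 * r) v.
pose sigma (h : seq T) := if h is x :: h' then W (last x h') else set0.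
have sigmaE (v : nat -> T) n : sigma (mkseq v n.+1) = W (v n).
  rewrite -(last_mkseq v n (v 0)).
  by rewrite /mkseq /=.
exists sigma; split.
  case=> [|x h] /=; first by rewrite cards0.
  set z := last x h.
  have : #|W z :\ z| <= k.
    apply: (Hf z) => w; rewrite in_setD1 => /andP[wne /inWR wr]; split=> //.
    case: (wr) => s [_ _ _ fm].
    have := fm z (mem_head _ _); rewrite leq_eqVlt => /orP[/eqP /finj eq|//].
    by rewrite eq eqxx in wne.
  rewrite (cardsD1 z (W z)); case: (z \in W z) => /=; rewrite ?add1n ?add0n //.
  by move=> /leqW.
move=> v legal; exfalso.
have C : forall i s, gpath e (v i) s -> last (v i) s = v i.+1 -> size s <= r ->
    (forall x, x \in v i :: s -> x \notin cop_sets sigma v i :&: cop_sets sigma v i.+1) ->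
    forall x, x \in v i :: s -> i <= f x.
  elim=> [//|i IH] q gq lq sq aq x xq.
  case: (legal i) => p [gp lp sp ap].
  have IHp := IH p gp lp sp ap.
  have [u uin umin] : exists2 u, u \in v i.+1 :: q & forall y, y \in v i.+1 :: q -> f u <= f y.
    move: (v i.+1); elim: q {gq lq sq aq xq} => [|y q IHq] z.
      by exists z; [exact: mem_head | move=> y; rewrite inE => /eqP ->].
    case: (IHq y) => u' u'in u'min.
    case: (leqP (f z) (f u')) => hz.
      exists z; first exact: mem_head.
      move=> y'; rewrite inE => /orP[/eqP ->//|/u'min]; exact: leq_trans.
    exists u'; first by rewrite inE u'in orbT.
    move=> y'; rewrite inE => /orP[/eqP ->|/u'min //]; exact: ltnW.
  have [y yin fy] : exists2 y, y \in v i :: p & f y < f u.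
    apply: NNPP => nex.
    have allp : forall y, y \in v i :: p -> f u <= f y.
      move=> y yin; rewrite leqNgt; apply/negP => lt; apply: nex; by exists y.
    have w1 : wreach e f (2 * r) (v i.+1) u.
      apply: walk_wreach umin => //; first by case/andP: gq.
      by apply: leq_trans sq _; rewrite mul2n -addnn leq_addr.
    have w2 : wreach e f (2 * r) (v i) u.
      apply: (@walk_wreach _ _ _ (p ++ q)).
      - rewrite cat_path lp; case/andP: gp => -> _; by case/andP: gq.
      - by rewrite size_cat mul2n -addnn leq_add.
      - move: uin; rewrite inE => /orP[/eqP ->|uq].
          by have := mem_last (v i) p; rewrite lp !inE mem_cat => /orP[->|->]; rewrite ?orbT.
        by rewrite inE mem_cat uq !orbT.
      - move=> x'; rewrite inE mem_cat orbA => /orP[xp|xq'].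
          by apply: allp; rewrite inE.
        by apply: umin; rewrite inE xq' orbT.
    have := aq u uin.
    change (u \notin sigma (mkseq v i.+1) :&: sigma (mkseq v i.+2) -> False).
    by rewrite !sigmaE in_setI => /negP; apply; apply/andP; split; apply/inWR.
  apply: leq_ltn_trans (IHp _ yin) (leq_trans fy (umin _ xq)).
pose M := \max_(x : T) f x.
case: (legal M.+1) => s [gs ls ss as_].
have := C M.+1 s gs ls ss as_ (v M.+1) (mem_head _ _).
by rewrite ltnNge leq_bigmax.
Qed.

Definition bnd r k (v : T) (W : {set T}) : Prop :=
  forall F : seq (seq T),
    (forall s, s \in F -> [/\ gpath e v s, size s <= r & last v s \in W]) ->
    (forall i j, i < size F -> j < size F -> i != j ->
       forall x, x \in v :: nth [::] F i -> x \in v :: nth [::] F j -> x = v) ->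
    size F <= k.

Lemma bnd_mono r k v (W W' : {set T}) :
  bnd r k v W -> (forall w, w \in W' -> w \in W) -> bnd r k v W'.
Proof.
move=> b sub F H1 H2; apply: b H2 => s sF; case: (H1 s sF) => ? ? /sub; by split.
Qed.

Lemma escape r k (U : {set T}) v (X Y : {set T}) :
  v \in U -> v \notin X -> #|Y| <= k.+1 -> ~ bnd r k v (U :\ v) ->
  exists w, [/\ w \in U, w \notin Y & robber_move e r (X :&: Y) v w].
Proof.
move=> vU vX cY nb.
case vY: (v \in Y).
  2: { exists v; split => //; first by rewrite vY.
       exists [::]; split => // x; rewrite inE => /eqP ->; by rewrite inE vY andbF. }
apply: NNPP => nex; apply: nb => F H1 H2.
pose n := size F.
have hasY : forall i : 'I_n, has (mem Y) (nth [::] F i).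
  move=> i; apply/negPn/negP => hn.
  have sF : nth [::] F i \in F by apply: mem_nth.
  case: (H1 _ sF) => gs ss ls.
  apply: nex; exists (last v (nth [::] F i)); split.
  - by move: ls; rewrite in_setD1 => /andP[].
  - move: ls; rewrite in_setD1 => /andP[lne _].
    have : last v (nth [::] F i) \in nth [::] F i.
      move: lne; case: (nth [::] F i) => [|a l]; first by rewrite /= eqxx.
      by move=> _; rewrite /= mem_last.
    move=> lin; apply/negP => lY; move/hasP: hn; apply; by exists (last v (nth [::] F i)).
  - exists (nth [::] F i); split => // x; rewrite inE => /orP[/eqP ->|xs].
      by rewrite inE negb_and vX.
    rewrite inE negb_and; apply/orP; right; apply/negP => xY.
    by move/hasP: hn; apply; exists x.
pose g (i : 'I_n) := nth v (nth [::] F i) (find (mem Y) (nth [::] F i)).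
have gin i : g i \in nth [::] F i by apply: mem_nth; rewrite -has_find.
have gY i : g i \in Y := nth_find v (hasY i).
have gv i : g i != v.
  have sF : nth [::] F i \in F by apply: mem_nth.
  case: (H1 _ sF) => /andP[_ /= /andP[vn _]] _ _.
  by apply/eqP => eq; move: (gin i); rewrite eq => vin; rewrite vin in vn.
have ginj : injective g.
  move=> i j eq; apply/eqP; apply: contraT => ne.
  have := H2 i j (ltn_ord i) (ltn_ord j) ne (g i).
  rewrite !inE gin orbT eq gin orbT => /(_ isT isT) /eqP.
  by rewrite -eq (negbTE (gv i)).
have : #|[set g i | i in 'I_n]| <= #|Y :\ v|.
  apply: subset_leq_card; apply/subsetP => x /imsetP [i _ ->].
  by rewrite in_setD1 gv gY.
rewrite card_imset // card_ord => h.
move: cY; rewrite (cardsD1 v Y) vY add1n ltnS; exact: leq_trans.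
Qed.

Lemma robber_wins r k (U : {set T}) : U != set0 ->
  (forall v, v \in U -> ~ bnd r k v (U :\ v)) -> ~ cops_win e r k.+1.
Proof.
move=> /set0Pn [v0 v0U] nb [sigma [Hcard Hwin]].
pose esc (v : T) (X Y : {set T}) : T := epsilon (inhabits v0)
  (fun w => [/\ w \in U, w \notin Y & robber_move e r (X :&: Y) v w]).
pose Sprev (h : seq T) := if size h is j.+2 then sigma (take j.+1 h) else set0.
pose step (h : seq T) := esc (last v0 h) (Sprev h) (sigma h).
pose fix hist n := if n is n'.+1 then rcons (hist n') (step (hist n')) else [:: v0].
pose vv n := last v0 (hist n).
have histE n : hist n = mkseq vv n.+1.
  elim: n => [//|n IH].
  by rewrite mkseqS -IH /vv /= last_rcons.
have vvS n : vv n.+1 = esc (vv n) (cop_sets sigma vv n) (cop_sets sigma vv n.+1).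
  rewrite /vv /= last_rcons /step histE last_mkseq; congr esc.
  case: n => [//|n] /=.
  rewrite /Sprev size_mkseq mkseqS -cats1 take_size_cat ?size_mkseq //.
have inv n : vv n \in U /\ vv n \notin cop_sets sigma vv n.
  elim: n => [|n [IH1 IH2]]; first by split => //; rewrite /= inE.
  have := @epsilon_spec _ (inhabits v0)
    (fun w => [/\ w \in U, w \notin cop_sets sigma vv n.+1 &
       robber_move e r (cop_sets sigma vv n :&: cop_sets sigma vv n.+1) (vv n) w]).
  rewrite -/(esc _ _ _) -vvS => H; case: H => //.
  apply: escape IH1 IH2 _ (nb _ IH1); exact: Hcard.
have legal i : robber_move e r (cop_sets sigma vv i :&: cop_sets sigma vv i.+1) (vv i) (vv i.+1).
  have [IH1 IH2] := inv i.
  have := @epsilon_spec _ (inhabits v0)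
    (fun w => [/\ w \in U, w \notin cop_sets sigma vv i.+1 &
       robber_move e r (cop_sets sigma vv i :&: cop_sets sigma vv i.+1) (vv i) w]).
  rewrite -/(esc _ _ _) -vvS => H; case: H => //.
  apply: escape IH1 IH2 _ (nb _ IH1); exact: Hcard.
case: (Hwin vv legal) => i [_ hi].
by case: (inv i) => _; rewrite hi.
Qed.

Lemma build r k : (forall W : {set T}, W != set0 -> exists2 v, v \in W & bnd r k v (W :\ v)) ->
  adm_ok e r k.
Proof.
move=> H.
have claim : forall n (U : {set T}), #|U| = n -> exists s, [/\ uniq s, s =i U &
    forall u, u \in s -> bnd r k u [set w | (w \in s) && (index w s < index u s)]].
  elim=> [|n IH] U cU.
    exists [::]; split => // x; move/eqP: cU; rewrite cards_eq0 => /eqP ->.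
    by rewrite inE.
  have Une : U != set0 by rewrite -card_gt0 cU.
  case: (H U Une) => v vU bv.
  have cU' : #|U :\ v| = n by move: cU; rewrite (cardsD1 v U) vU add1n => [[]].
  case: (IH _ cU') => s' [us' es' bs'].
  have vns' : v \notin s' by rewrite es' in_setD1 eqxx.
  exists (rcons s' v); split.
  - by rewrite rcons_uniq vns' us'.
  - move=> x; rewrite mem_rcons inE es' in_setD1.
    by case: eqP => [->|] //=.
  - move=> u; rewrite -cats1 mem_cat inE => /orP[us|/eqP ->].
      apply: bnd_mono (bs' u us) _ => w; rewrite !inE mem_cat !index_cat us.
      case/andP => _; case: ifP => [ws h|_ h]; first by apply/andP; split. exfalso.
      have hu : index u s' < size s' by rewrite index_mem.
      move: h; rewrite ltnNge; move/negP; apply; apply: leq_trans (ltnW hu) (leq_addr _ _).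
    apply: bnd_mono bv _ => w; rewrite !inE mem_cat !index_cat (negbTE vns').
    case/andP => _; case: ifP => [ws _|_]; last by rewrite /= eqxx addn0 ltnNge leq_addr.
    by rewrite -in_setD1 -es'.
case: (claim _ setT erefl) => s [us es bs].
have allin x : x \in s by rewrite es inE.
exists (fun x => index x s); split.
  move=> x y eq; by rewrite -(nth_index x (allin x)) eq nth_index.
move=> v F H1 H2; apply: (bs v (allin v)) H2 => s0 s0F.
case: (H1 _ s0F) => g sz lt; split => //; by rewrite inE allin.
Qed.

Lemma lower r k : cops_win e r k.+1 -> adm_ok e r k.
Proof.
move=> cw; apply: build => W Wne.
case: (classic (exists2 v, v \in W & bnd r k v (W :\ v))) => // Hn.
exfalso; apply: (robber_wins Wne _ cw) => v vW b; apply: Hn; by exists v.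
Qed.

End G.

Theorem mainTheorem2 (T : finType) (e : rel T)
    (e_sym : symmetric e) (e_irr : irreflexive e) (r : nat) :
  adm e r + 1 <= copw e r <= wcol e (2 * r) + 1.
Proof.
have exc : exists n, 1 <= n /\ cops_win e r n.
  exists #|T|.+1; split => //.
  exists (fun _ => setT); split; first by move=> _; rewrite cardsT leqW.
  by move=> v _; exists 1; split => //; rewrite /= inE.
have [[c1 cw] cmin] := least_spec exc.
have exw : exists n, wcol_ok e (2 * r) n.
  exists #|T|; exists (fun x => nat_of_ord (enum_rank x)); split.
    by move=> x y /val_inj /enum_rank_inj.
  by move=> v A _; apply: max_card.
have [ww wmin] := least_spec exw.
apply/andP; split.
  rewrite /copw; move: c1 cw; case: (least _) => [//|k] _ cw.
  have ak := lower cw.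
  have [_ amin] := least_spec (ex_intro _ k ak).
  by rewrite addn1 ltnS; apply: amin.
rewrite addn1; apply: cmin; split => //; exact: upper.
Qed.
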